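(* Consider a finite population of $N$ units $i=1,\dots,N$ observed over two experiment iterations $t=1,2$. Each unit has a treatment path $\mathbf{Z}_i=(Z_{i,1},Z_{i,2})\in\{(c,c),(c,v_2),(v_1,v_2)\}$, where $c$ is control, $v_1$ is the treatment version used in iteration 1 and $v_2$ is the (possibly modified) version used in iteration 2. Each unit has fixed (non-random) potential outcomes $Y_{i,1}(z_1)$ for $z_1\in\{c,v_1,v_2\}$ and $Y_{i,2}(z_1,z_2)$ for $(z_1,z_2)\in\{(c,c),(c,v_2),(v_1,v_2)\}$. Assume the time-invariant control effect: $Y_{i,2}(c,v)-Y_{i,2}(c,c)=Y_{i,1}(v)-Y_{i,1}(c)$ for all $i$ and $v\in\{v_1,v_2\}$. Let fixed positive integers $N_{v_1},N_{c,v_2},N_{c,c}$ with $N_{v_1}+N_{c,v_2}+N_{c,c}=N$ be given (so that the iteration-1 treated proportion $p_1=N_{v_1}/N$ is strictly smaller than the iteration-2 treated proportion $p_2=(N_{v_1}+N_{c,v_2})/N$). The assignment is a two-iteration stepped-wedge completely randomized design: in iteration 1 a uniformly random set of $N_{v_1}$ units receives $v_1$ (and these units receive $v_2$ in iteration 2), and in iteration 2 a uniformly random subset of $N_{c,v_2}$ of the remaining units is moved from control to $v_2$; the other $N_{c,c}$ units stay in control in both iterations. The observed outcomes are $Y_{i,1}^{\mathrm{obs}}=Y_{i,1}(Z_{i,1})$ and $Y_{i,2}^{\mathrm{obs}}=Y_{i,2}(Z_{i,1},Z_{i,2})$. Define the population value of iterative experimentation $\tau_1=\frac1N\sum_{i=1}^N[Y_{i,1}(v_2)-Y_{i,1}(v_1)]$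 and the estimator $$\hat\tau_1=\frac{1}{N_{c,v_2}}\sum_{i=1}^N Y_{i,2}^{\mathrm{obs}}\mathbb{1}(\mathbf{Z}_i=(c,v_2))-\frac{1}{N_{v_1}}\sum_{i=1}^N Y_{i,1}^{\mathrm{obs}}\mathbb{1}(Z_{i,1}=v_1)-\frac{1}{N_{c,c}}\sum_{i=1}^N\big[Y_{i,2}^{\mathrm{obs}}-Y_{i,1}^{\mathrm{obs}}\big]\mathbb{1}(\mathbf{Z}_i=(c,c)).$$ Then $\mathbb{E}[\hat\tau_1]=\tau_1$ and $$\mathbb{V}[\hat\tau_1]=\frac{1}{N_{c,v_2}}S^2_{c,v_2}+\frac{1}{N_{v_1}}S^2_{v_1}+\frac{1}{N_{c,c}}S^2_{\Delta}-\frac1N S^2_\tau,$$ where, writing $\bar Y_2(c,v_2)=\frac1N\sum_i Y_{i,2}(c,v_2)$, $\bar Y_1(v_1)=\frac1N\sum_iY_{i,1}(v_1)$, $\bar Y_2(c,c)=\frac1N\sum_iY_{i,2}(c,c)$, $\bar Y_1(c)=\frac1N\sum_iY_{i,1}(c)$, $S^2_{c,v_2}=\frac{1}{N-1}\sum_i[Y_{i,2}(c,v_2)-\bar Y_2(c,v_2)]^2$, $S^2_{v_1}=\frac{1}{N-1}\sum_i[Y_{i,1}(v_1)-\bar Y_1(v_1)]^2$, $S^2_\Delta=\frac{1}{N-1}\sum_i[(Y_{i,2}(c,c)-Y_{i,1}(c))-(\bar Y_2(c,c)-\bar Y_1(c))]^2$, and $S^2_\tau=\frac{1}{N-1}\s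um_i[Y_{i,2}(c,v_2)-Y_{i,1}(v_1)-(Y_{i,2}(c,c)-Y_{i,1}(c))-\tau_1]^2$.
   Context: Expectations and variances are over the random assignment only; potential outcomes are fixed (finite-population, design-based framework). Writing potential outcomes as $Y_{i,1}(Z_{i,1})$ and $Y_{i,2}(Z_{i,1},Z_{i,2})$ encodes the paper's non-anticipation (iteration-1 outcomes do not depend on iteration-2 assignments) and no-interference (outcomes depend only on the unit's own path) assumptions. $Y_{i,1}(v_2)$ is a hypothetical potential outcome (the outcome had the final version been available in iteration 1). Under the time-invariant control effect, $\tau_1=\frac1N\sum_i[Y_{i,2}(c,v_2)-Y_{i,1}(v_1)-(Y_{i,2}(c,c)-Y_{i,1}(c))]$. *)

(* Defs.v *)
From HB Require Import structures.
From mathcomp Require Import all_boot all_order all_algebra.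
Unset Printing Implicit Defensive.
Import Order.TTheory GRing.Theory Num.Theory.
Local Open Scope ring_scope.

Inductive trt := Tc | Tv1 | Tv2.

Definition trt_eqb (a b : trt) : bool :=
  match a, b with
  | Tc, Tc | Tv1, Tv1 | Tv2, Tv2 => true
  | _, _ => false
  end.

Section Design.
Variables (R : realFieldType) (N Nv1 Ncv2 Ncc : nat).

(* An assignment is given by A (units treated with v1 in iteration 1) and
   B (units moved from control to v2 in iteration 2). *)
Definition Z1 (A B : {set 'I_N}) (i : 'I_N) : trt :=
  if i \in A then Tv1 else Tc.
Definition Z2 (A B : {set 'I_N}) (i : 'I_N) : trt :=
  if i \in A then Tv2 else if i \in B then Tv2 else Tc.

Definition ind (b : bool) : R := if b then 1 else 0.

Definition SWexp (f : {set 'I_N} -> {set 'I_N} -> R) : R :=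
  \sum_(A : {set 'I_N} | #|A| == Nv1)
     ('C(N, Nv1)%:R)^-1 *
     \sum_(B : {set 'I_N} | (B \subset ~: A) && (#|B| == Ncv2))
        ('C(N - Nv1, Ncv2)%:R)^-1 * f A B.

Definition SWvar (f : {set 'I_N} -> {set 'I_N} -> R) : R :=
  SWexp (fun A B => (f A B - SWexp f) ^+ 2).

Variables (Y1 : 'I_N -> trt -> R) (Y2 : 'I_N -> trt -> trt -> R).

Definition Yobs1 A B i : R := Y1 i (Z1 A B i).
Definition Yobs2 A B i : R := Y2 i (Z1 A B i) (Z2 A B i).

Definition tauhat1 (A B : {set 'I_N}) : R :=
  (Ncv2%:R)^-1 * \sum_(i < N) Yobs2 A B i *
       ind (trt_eqb (Z1 A B i) Tc && trt_eqb (Z2 A B i) Tv2)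
  - (Nv1%:R)^-1 * \sum_(i < N) Yobs1 A B i * ind (trt_eqb (Z1 A B i) Tv1)
  - (Ncc%:R)^-1 * \sum_(i < N) (Yobs2 A B i - Yobs1 A B i) *
       ind (trt_eqb (Z1 A B i) Tc && trt_eqb (Z2 A B i) Tc).

Definition tau1 : R := (N%:R)^-1 * \sum_(i < N) (Y1 i Tv2 - Y1 i Tv1).

Definition mean (f : 'I_N -> R) : R := (N%:R)^-1 * \sum_(i < N) f i.
Definition S2 (f : 'I_N -> R) : R :=
  ((N%:R - 1)^-1) * \sum_(i < N) (f i - mean f) ^+ 2.

Definition S2_cv2 : R := S2 (fun i => Y2 i Tc Tv2).
Definition S2_v1 : R := S2 (fun i => Y1 i Tv1).
Definition S2_Delta : R := S2 (fun i => Y2 i Tc Tc - Y1 i Tc).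
Definition S2_tau : R :=
  ((N%:R - 1)^-1) * \sum_(i < N)
     (Y2 i Tc Tv2 - Y1 i Tv1 - (Y2 i Tc Tc - Y1 i Tc) - tau1) ^+ 2.

End Design.

(* Main.v *)
Require Import Defs.
From HB Require Import structures.
From mathcomp Require Import all_boot all_order all_algebra.
From mathcomp Require Import ring lra zify.
Import Order.TTheory GRing.Theory Num.Theory.
Local Open Scope ring_scope.

Section Moments.
Variables (R : realFieldType) (N : nat).
Local Notation ind := (ind R).

Definition Dsum (S : {set 'I_N}) k (F : {set 'I_N} -> R) :=
  \sum_(B : {set 'I_N} | (B \subset S) && (#|B| == k)) F B.
Definition sm (X : {set 'I_N}) (f : 'I_N -> R) :=
  \sum_(i < N) f i * ind (i \in X).

Lemma Dsum_ind (S : {set 'I_N}) (k : nat) (Q : pred {set 'I_N}) :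
  Dsum S k (fun B => ind (Q B)) =
  #|[set B : {set 'I_N} | (B \subset S) && (#|B| == k) && Q B]|%:R.
Proof.
rewrite /Dsum -sum1_card natr_sum big_mkcond [RHS]big_mkcond /=.
apply: eq_bigr => B _; rewrite inE /ind.
by case: (_ && _); case: (Q B).
Qed.

Lemma Dsum_sub (S X : {set 'I_N}) (k : nat) : X \subset S ->
  Dsum S k (fun B => ind (B \subset S :\: X)) = 'C((#|S| - #|X|)%N, k)%:R.
Proof.
move=> XS; rewrite Dsum_ind.
have -> : (#|S| - #|X|)%N = #|S :\: X|.
  by rewrite cardsD (setIidPr XS).
rewrite -cards_draws; congr (_%:R); apply: eq_card => B; rewrite !inE.
rewrite subsetD; by case: (B \subset S); case: (#|B| == k); case: [disjoint B & X].
Qed.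

Lemma Dsum1 (S : {set 'I_N}) (k : nat) : Dsum S k (fun _ => 1) = 'C(#|S|, k)%:R.
Proof.
have := @Dsum_sub S set0 k (sub0set S); rewrite cards0 subn0 => <-.
by apply: eq_bigr => B /andP[BS _]; rewrite setD0 BS.
Qed.

Lemma DsumD (S : {set 'I_N}) (k : nat) (F G : {set 'I_N} -> R) : Dsum S k (fun B => F B + G B) = Dsum S k F + Dsum S k G.
Proof. by rewrite /Dsum big_split. Qed.
Lemma DsumN (S : {set 'I_N}) (k : nat) (F : {set 'I_N} -> R) : Dsum S k (fun B => - F B) = - Dsum S k F.
Proof. by rewrite /Dsum sumrN. Qed.
Lemma DsumZ (S : {set 'I_N}) (k : nat) (c : R) (F : {set 'I_N} -> R) : Dsum S k (fun B => c * F B) = c * Dsum S k F.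
Proof. by rewrite /Dsum mulr_sumr. Qed.
Lemma Dsum_ext (S : {set 'I_N}) (k : nat) (F G : {set 'I_N} -> R) : (forall B : {set 'I_N}, B \subset S -> #|B| == k -> F B = G B) -> Dsum S k F = Dsum S k G.
Proof. by move=> h; apply: eq_bigr => B /andP[/h H /H]. Qed.

Definition c1 s k : R := 'C(s, k)%:R - 'C(s.-1, k)%:R.
Definition c2 s k : R := 'C(s, k)%:R - 2 * 'C(s.-1, k)%:R + 'C(s.-2, k)%:R.

Lemma Dsum_in1 (S : {set 'I_N}) (k : nat) (i : 'I_N) : i \in S ->
  Dsum S k (fun B => ind (i \in B)) = c1 #|S| k.
Proof.
move=> iS.
have h : forall B : {set 'I_N}, B \subset S -> ind (i \in B) = 1 - ind (B \subset S :\: [set i]).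
  move=> B BS; rewrite subsetD BS /= disjoint_sym disjoints1 /ind.
  by case: (i \in B) => /=; ring.
rewrite (Dsum_ext _ _ _ _ (fun B BS _ => h B BS)) DsumD DsumN Dsum1 Dsum_sub ?sub1set // cards1 subn1.
by [].
Qed.


Lemma Dsum0 (S : {set 'I_N}) (k : nat) : Dsum S k (fun _ => 0) = 0.
Proof. by rewrite /Dsum big1. Qed.

Lemma Dsum_in2 (S : {set 'I_N}) (k : nat) (i j : 'I_N) : i \in S -> j \in S -> i != j ->
  Dsum S k (fun B => ind (i \in B) * ind (j \in B)) = c2 #|S| k.
Proof.
move=> iS jS ij.
have h : forall B : {set 'I_N}, B \subset S -> ind (i \in B) * ind (j \in B) =
   1 + - ind (B \subset S :\: [set i]) + - ind (B \subset S :\: [set j])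
   + ind (B \subset S :\: [set i; j]).
  move=> B BS; rewrite !subsetD BS /= !(disjoint_sym B) !disjoints_subset subUset !sub1set !inE /ind.
  by case: (i \in B); case: (j \in B) => /=; ring.
rewrite (Dsum_ext _ _ _ _ (fun B BS _ => h B BS)) !DsumD !DsumN Dsum1 !Dsum_sub ?sub1set ?subUset ?sub1set ?iS ?jS //.
rewrite !cards1 cards2 ij subn1 /= subn2 /c2; ring.
Qed.

Lemma Dsum_pair (S : {set 'I_N}) (k : nat) (i j : 'I_N) :
  Dsum S k (fun B => ind (i \in B) * ind (j \in B)) =
  ind (i \in S) * ind (j \in S) * (if i == j then c1 #|S| k else c2 #|S| k).
Proof.
case iS: (i \in S); last first.
  have -> : ind false * ind (j \in S) * (if i == j then c1 #|S| k else c2 #|S| k) = 0.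
    rewrite /ind /=; ring.
  rewrite -[RHS](Dsum0 S k); apply: Dsum_ext => B BS _.
  have -> : (i \in B) = false by apply/negP => /(subsetP BS); rewrite iS.
  rewrite /ind; ring.
case jS: (j \in S); last first.
  have -> : ind true * ind false * (if i == j then c1 #|S| k else c2 #|S| k) = 0.
    rewrite /ind /=; ring.
  rewrite -[RHS](Dsum0 S k); apply: Dsum_ext => B BS _.
  have -> : (j \in B) = false by apply/negP => /(subsetP BS); rewrite jS.
  rewrite /ind; ring.
rewrite {3 4}/ind /= !mul1r; case: eqVneq => [<-|ij].
  rewrite -(@Dsum_in1 S k i iS); apply: Dsum_ext => B _ _ /=; rewrite /ind; case: (i \in B) => /=; ring.
exact: Dsum_in2.
Qed.

Lemma Dsum_sum (S : {set 'I_N}) (k : nat) (F : 'I_N -> {set 'I_N} -> R) :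
  Dsum S k (fun B => \sum_(i < N) F i B) = \sum_(i < N) Dsum S k (F i).
Proof. by rewrite /Dsum exchange_big. Qed.

Lemma Dsum_in (S : {set 'I_N}) (k : nat) (i : 'I_N) :
  Dsum S k (fun B => ind (i \in B)) = ind (i \in S) * c1 #|S| k.
Proof.
case iS: (i \in S); first by rewrite (@Dsum_in1 S k i iS) /ind mul1r.
rewrite /ind mul0r -[RHS](Dsum0 S k); apply: Dsum_ext => B BS _.
have -> : (i \in B) = false by apply/negP => /(subsetP BS); rewrite iS.
by [].
Qed.

Lemma M1 (S : {set 'I_N}) (k : nat) (f : 'I_N -> R) :
  Dsum S k (fun B => sm B f) = c1 #|S| k * sm S f.
Proof.
rewrite /sm Dsum_sum mulr_sumr; apply: eq_bigr => i _.
by rewrite DsumZ Dsum_in; ring.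
Qed.

Lemma sum_ind_eq (F : 'I_N -> R) (i : 'I_N) : \sum_(j < N) F j * ind (i == j) = F i.
Proof.
rewrite (bigD1 i) //= eqxx /ind mulr1 big1 ?addr0 // => j ji.
by rewrite eq_sym (negbTE ji) mulr0.
Qed.

Lemma M2 (S : {set 'I_N}) (k : nat) (f g : 'I_N -> R) :
  Dsum S k (fun B => sm B f * sm B g) =
  c2 #|S| k * (sm S f * sm S g) + (c1 #|S| k - c2 #|S| k) * sm S (fun i => f i * g i).
Proof.
have e : forall B, sm B f * sm B g =
   \sum_(i < N) \sum_(j < N) (f i * g j) * (ind (i \in B) * ind (j \in B)).
  move=> B; rewrite /sm mulr_suml; apply: eq_bigr => i _.
  rewrite mulr_sumr; apply: eq_bigr => j _; ring.
rewrite (Dsum_ext _ _ _ _ (fun B _ _ => e B)) Dsum_sum.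
under eq_bigr do rewrite Dsum_sum.
under eq_bigr do under eq_bigr do rewrite DsumZ Dsum_pair.
have e2 : forall (i j : 'I_N), (if i == j then c1 #|S| k else c2 #|S| k) =
   c2 #|S| k + (c1 #|S| k - c2 #|S| k) * ind (i == j).
  by move=> i j; rewrite /ind; case: (i == j); ring.
under eq_bigr do under eq_bigr do rewrite e2.
rewrite /sm mulr_suml mulr_sumr mulr_sumr -big_split /=; apply: eq_bigr => i _.
rewrite mulr_sumr mulr_sumr.
have -> : (c1 #|S| k - c2 #|S| k) * (f i * g i * ind (i \in S)) =
   \sum_(j < N) ((c1 #|S| k - c2 #|S| k) * (f i * g j * ind (i \in S) * ind (j \in S))) * ind (i == j).
  rewrite sum_ind_eq /ind; case: (i \in S); ring.
rewrite -big_split /=; apply: eq_bigr => j _; ring.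
Qed.


Lemma binr (s k : nat) : (0 < k)%N -> (k < s)%N ->
  [/\ ('C(s, k)%:R : R) != 0,
      c1 s k / 'C(s, k)%:R = k%:R / s%:R &
      c2 s k / 'C(s, k)%:R = (k%:R * (k%:R - 1)) / (s%:R * (s%:R - 1))].
Proof.
case: s => [//|[|s]] k0 ks; first by move: k0 ks; case: k.
have x0 : ('C(s.+2, k)%:R : R) != 0 by rewrite pnatr_eq0 -lt0n bin_gt0 ltnW.
have h1 := mul_bin_down s.+2 k. have h2 := mul_bin_down s.+1 k.
rewrite /= in h1 h2.
have s0 : (0 : R) <= s%:R := ler0n R s.
have hy : ('C(s.+1, k)%:R : R) = (s.+2 - k)%:R * 'C(s.+2, k)%:R / s.+2%:R.
  rewrite -natrM -h1 natrM; field; clear -s0; lra.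
have hz : ('C(s, k)%:R : R) = (s.+1 - k)%:R * 'C(s.+1, k)%:R / s.+1%:R.
  rewrite -natrM -h2 natrM; field; clear -s0; lra.
rewrite /c1 /c2 /=; split => //.
  rewrite hy natrB ?(ltnW ks) //; field; rewrite x0 /=; clear -s0; lra.
rewrite hz hy !natrB ?(ltnW ks) //.
have e1 : (s.+1%:R : R) = s.+2%:R - 1 by rewrite -!natr1; ring.
rewrite e1; field.
rewrite x0 /=; clear -s0; lra.
Qed.

Definition Ex (S : {set 'I_N}) (k : nat) (F : {set 'I_N} -> R) :=
  ('C(#|S|, k)%:R)^-1 * Dsum S k F.

Lemma ExD (S : {set 'I_N}) (k : nat) (F G : {set 'I_N} -> R) :
  Ex S k (fun B => F B + G B) = Ex S k F + Ex S k G.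
Proof. by rewrite /Ex DsumD mulrDr. Qed.
Lemma ExZ (S : {set 'I_N}) (k : nat) (c : R) (F : {set 'I_N} -> R) :
  Ex S k (fun B => c * F B) = c * Ex S k F.
Proof. by rewrite /Ex DsumZ mulrCA. Qed.
Lemma Ex_ext (S : {set 'I_N}) (k : nat) (F G : {set 'I_N} -> R) :
  (forall B : {set 'I_N}, B \subset S -> #|B| == k -> F B = G B) -> Ex S k F = Ex S k G.
Proof. by move=> h; rewrite /Ex (Dsum_ext _ _ _ _ h). Qed.

Lemma Ex_const (S : {set 'I_N}) (k : nat) (c : R) : (0 < k)%N -> (k < #|S|)%N ->
  Ex S k (fun _ => c) = c.
Proof.
move=> k0 ks; have [x0 _ _] := binr _ _ k0 ks.
rewrite (@Ex_ext S k _ (fun _ => c * 1)); last by move=> *; rewrite mulr1.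
rewrite ExZ.
by rewrite /Ex Dsum1 mulVf ?mulr1.
Qed.

Lemma Ex1 (S : {set 'I_N}) (k : nat) (c : R) (f : 'I_N -> R) : (0 < k)%N -> (k < #|S|)%N ->
  Ex S k (fun B => c + sm B f) = c + k%:R / #|S|%:R * sm S f.
Proof.
move=> k0 ks; have [x0 e1 _] := binr _ _ k0 ks.
rewrite ExD Ex_const // /Ex M1 mulrA mulrC -e1; congr (_ + _); rewrite mulrC; field; exact: x0.
Qed.

Lemma Ex2 (S : {set 'I_N}) (k : nat) (c c' : R) (f g : 'I_N -> R) : (0 < k)%N -> (k < #|S|)%N ->
  Ex S k (fun B => (c + sm B f) * (c' + sm B g)) =
  c * c' + c * (k%:R / #|S|%:R * sm S g) + c' * (k%:R / #|S|%:R * sm S f)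
  + (k%:R * (k%:R - 1)) / (#|S|%:R * (#|S|%:R - 1)) * (sm S f * sm S g)
  + (k%:R / #|S|%:R - (k%:R * (k%:R - 1)) / (#|S|%:R * (#|S|%:R - 1)))
     * sm S (fun i => f i * g i).
Proof.
move=> k0 ks; have [x0 e1 e2] := binr _ _ k0 ks.
rewrite (@Ex_ext S k _ (fun B => c * c' + (c * sm B g + (c' * sm B f + sm B f * sm B g)))); last first.
  by move=> *; ring.
rewrite !ExD !ExZ Ex_const // /Ex !M1 M2 -e1 -e2; field; exact: x0.
Qed.

End Moments.
Arguments Dsum {R N}.
Arguments sm {R N}.
Arguments Ex {R N}.

Section LF.
Variables (R : realFieldType) (N : nat) (a b d : 'I_N -> R).

Definition lf (p q r : R) (i : 'I_N) := p * a i + q * b i + r * d i.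

Lemma sm_lf (X : {set 'I_N}) p q r : sm X (lf p q r) = p * sm X a + q * sm X b + r * sm X d.
Proof. by rewrite /sm !mulr_sumr -!big_split /=; apply: eq_bigr => i _; rewrite /lf; ring. Qed.

Lemma smT (f : 'I_N -> R) : sm [set: 'I_N] f = \sum_(i < N) f i.
Proof. by apply: eq_bigr => i _; rewrite inE /ind mulr1. Qed.

Lemma smC (X : {set 'I_N}) (f : 'I_N -> R) : sm (~: X) f = \sum_(i < N) f i - sm X f.
Proof.
rewrite /sm -sumrB; apply: eq_bigr => i _; rewrite inE /ind.
by case: (i \in X) => /=; ring.
Qed.

Lemma sum_lf p q r : \sum_(i < N) lf p q r i =
  p * \sum_(i < N) a i + q * \sum_(i < N) b i + r * \sum_(i < N) d i.
Proof. by rewrite !mulr_sumr -!big_split /=; apply: eq_bigr => i _; rewrite /lf; ring. Qed.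

Lemma sum_lf2 p q r p' q' r' : \sum_(i < N) lf p q r i * lf p' q' r' i =
  p * p' * \sum_(i < N) a i * a i + q * q' * \sum_(i < N) b i * b i
  + r * r' * \sum_(i < N) d i * d i + (p * q' + q * p') * \sum_(i < N) a i * b i
  + (p * r' + r * p') * \sum_(i < N) a i * d i + (q * r' + r * q') * \sum_(i < N) b i * d i.
Proof. by rewrite !mulr_sumr -!big_split /=; apply: eq_bigr => i _; rewrite /lf; ring. Qed.

Lemma sqdev (F : 'I_N -> R) t : \sum_(i < N) (F i - t) ^+ 2 =
  \sum_(i < N) F i * F i - 2 * t * \sum_(i < N) F i + t ^+ 2 * N%:R.
Proof.
have -> : t ^+ 2 * N%:R = \sum_(i < N) t ^+ 2 by rewrite sumr_const card_ord mulr_natr.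
rewrite mulr_sumr -sumrN -!big_split /=.
by apply: eq_bigr => i _; ring.
Qed.

End LF.
Arguments lf {R N}.


Section Core.
Variables (R : realFieldType) (N n1 n2 n3 : nat).
Hypotheses (h1 : (0 < n1)%N) (h2 : (0 < n2)%N) (h3 : (0 < n3)%N) (hN : (n1 + n2 + n3)%N = N).
Variables (a b d : 'I_N -> R).

Let u := lf a b d 0 (- (n1%:R)^-1) ((n3%:R)^-1).
Let w := lf a b d ((n2%:R)^-1) 0 ((n3%:R)^-1).
Let K := - ((n3%:R)^-1 * \sum_(i < N) d i).
Definition Tcore (A B : {set 'I_N}) : R := K + sm A u + sm B w.

Lemma SWexp_ext (f g : {set 'I_N} -> {set 'I_N} -> R) :
  (forall A B : {set 'I_N}, #|A| == n1 -> B \subset ~: A -> f A B = g A B) ->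
  SWexp R N n1 n2 f = SWexp R N n1 n2 g.
Proof.
move=> h; rewrite /SWexp; apply: eq_bigr => A hA; congr (_ * _).
by apply: eq_bigr => B /andP[hB _]; rewrite h.
Qed.

Lemma cardC (A : {set 'I_N}) : #|A| == n1 -> #|~: A| = (n2 + n3)%N.
Proof. move/eqP=> hA; have := cardsC A; rewrite card_ord; lia. Qed.

Lemma SWexpE (f : {set 'I_N} -> {set 'I_N} -> R) :
  SWexp R N n1 n2 f = Ex [set: 'I_N] n1 (fun A => Ex (~: A) n2 (f A)).
Proof.
rewrite /SWexp /Ex /Dsum cardsT card_ord mulr_sumr.
apply: eq_big => [A|A hA]; first by rewrite subsetT.
rewrite mulr_sumr (cardC _ hA).
have -> : (N - n1)%N = (n2 + n3)%N by lia.
by rewrite !mulr_sumr.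
Qed.

Let eN : (N%:R : R) = n1%:R + n2%:R + n3%:R. Proof. by rewrite -hN !natrD. Qed.
Let p1 : (0 : R) < n1%:R. Proof. by rewrite ltr0n. Qed.
Let p2 : (0 : R) < n2%:R. Proof. by rewrite ltr0n. Qed.
Let p3 : (0 : R) < n3%:R. Proof. by rewrite ltr0n. Qed.

Lemma core_mean : SWexp R N n1 n2 Tcore = (N%:R)^-1 * \sum_(i < N) (a i - b i - d i).
Proof.
set c := n2%:R / (n2%:R + n3%:R) : R.
set h := lf a b d (- c / n2%:R) (- (n1%:R)^-1) ((n3%:R)^-1 - c / n3%:R).
rewrite SWexpE (@Ex_ext _ _ _ _ _ (fun A => (K + c * \sum_(i < N) w i) + sm A h)); last first.
  move=> A _ hA; rewrite /Tcore Ex1 ?(cardC _ hA) //; last by lia.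
  rewrite smC natrD /h /u /w !sm_lf -/c; ring.
rewrite Ex1 ?cardsT ?card_ord; [|done|lia].
rewrite smT /h /w !sum_lf.
have -> : \sum_(i < N) (a i - b i - d i) = \sum_(i < N) lf a b d 1 (-1) (-1) i.
  by apply: eq_bigr => i _; rewrite /lf; ring.
rewrite sum_lf /K /c eN; field.
by repeat (apply/andP; split); apply: lt0r_neq0; rewrite -?natrD ltr0n; lia.
Qed.


Ltac nzt := repeat (apply/andP; split); apply: lt0r_neq0;
  first [ rewrite -?natrD ltr0n; lia | rewrite subr_gt0 -?natrD ltr1n; lia ].

Lemma core_var (t : R) : t = (N%:R)^-1 * \sum_(i < N) (a i - b i - d i) ->
  SWvar R N n1 n2 Tcore =
  (n2%:R)^-1 * S2 R N a + (n1%:R)^-1 * S2 R N b + (n3%:R)^-1 * S2 R N d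
  - (N%:R)^-1 * ((N%:R - 1)^-1 * \sum_(i < N) (a i - b i - d i - t) ^+ 2).
Proof.
move=> ht.
rewrite /SWvar core_mean -ht SWexpE.
set c := n2%:R / (n2%:R + n3%:R) : R.
set al := n2%:R * (n2%:R - 1) / ((n2%:R + n3%:R) * (n2%:R + n3%:R - 1)) : R.
set w' := lf a b d (- (n2%:R)^-1) 0 (- (n3%:R)^-1).
set ww := fun i => w' i * w i.
have -> : Ex [set: 'I_N] n1 (fun A => Ex (~: A) n2 (fun B => (Tcore A B - t) ^+ 2)) =
  Ex [set: 'I_N] n1 (fun A =>
     (K - t + sm A u) * (K - t + sm A u)
     + (2 * c) * ((K - t + sm A u) * (\sum_(i < N) w i + sm A w'))
     + al * ((\sum_(i < N) w i + sm A w') * (\sum_(i < N) w i + sm A w'))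
     + (c - al) * (\sum_(i < N) w i * w i + sm A ww)).
  apply: Ex_ext => A _ hA.
  rewrite (@Ex_ext _ _ _ _ _ (fun B => (K - t + sm A u + sm B w) * (K - t + sm A u + sm B w))); last first.
    by move=> B _ _; rewrite /Tcore; ring.
  rewrite Ex2 ?(cardC _ hA); [|done|lia].
  have -> : sm A ww = - sm A (fun i => w i * w i).
    by rewrite /sm -sumrN; apply: eq_bigr => i _; rewrite /ww /w' /w /lf; ring.
  rewrite !smC natrD /w' /w !sm_lf -/c -/al; ring.
rewrite !ExD !ExZ !Ex2 ?Ex1 ?cardsT ?card_ord; try done; try lia.
rewrite !smT /ww /u /w' /w !sum_lf2 !sum_lf.
rewrite /S2 /mean !sqdev ht.
have -> : \sum_(i < N) (a i - b i - d i) * (a i - b i - d i) =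
          \sum_(i < N) lf a b d 1 (-1) (-1) i * lf a b d 1 (-1) (-1) i.
  by apply: eq_bigr => i _; rewrite /lf; ring.
have -> : \sum_(i < N) (a i - b i - d i) = \sum_(i < N) lf a b d 1 (-1) (-1) i.
  by apply: eq_bigr => i _; rewrite /lf; ring.
rewrite !sum_lf2 !sum_lf /K /c /al eN.
move: (\sum_(i < N) a i) (\sum_(i < N) b i) (\sum_(i < N) d i) => Sa Sb Sd.
move: (\sum_(i < N) a i * a i) (\sum_(i < N) b i * b i) (\sum_(i < N) d i * d i) => Saa Sbb Sdd.
move: (\sum_(i < N) a i * b i) (\sum_(i < N) a i * d i) (\sum_(i < N) b i * d i) => Sab Sad Sbd.
field.
nzt.
Qed.

End Core.

Theorem theorem1 (R : realFieldType) (N Nv1 Ncv2 Ncc : nat)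
  (hv1 : (0 < Nv1)%N) (hcv2 : (0 < Ncv2)%N) (hcc : (0 < Ncc)%N)
  (hN : (Nv1 + Ncv2 + Ncc)%N = N)
  (Y1 : 'I_N -> trt -> R) (Y2 : 'I_N -> trt -> trt -> R)
  (htic : forall (i : 'I_N) (v : trt), v = Tv1 \/ v = Tv2 ->
     Y2 i Tc v - Y2 i Tc Tc = Y1 i v - Y1 i Tc) :
  SWexp R N Nv1 Ncv2 (tauhat1 R N Nv1 Ncv2 Ncc Y1 Y2) = tau1 R N Y1
  /\ SWvar R N Nv1 Ncv2 (tauhat1 R N Nv1 Ncv2 Ncc Y1 Y2)
     = (Ncv2%:R)^-1 * S2_cv2 R N Y2 + (Nv1%:R)^-1 * S2_v1 R N Y1
       + (Ncc%:R)^-1 * S2_Delta R N Y1 Y2 - (N%:R)^-1 * S2_tau R N Y1 Y2.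
Proof.
pose a := fun i => Y2 i Tc Tv2.
pose b := fun i => Y1 i Tv1.
pose d := fun i => Y2 i Tc Tc - Y1 i Tc.
have hT : forall A B : {set 'I_N}, #|A| == Nv1 -> B \subset ~: A ->
   tauhat1 R N Nv1 Ncv2 Ncc Y1 Y2 A B = Tcore R N Nv1 Ncv2 Ncc a b d A B.
  move=> A B _ BA.
  rewrite /tauhat1 /Tcore /sm /lf !mulr_sumr -!sumrN -!big_split /=.
  apply: eq_bigr => i _.
  have [iA|iA] := boolP (i \in A).
    have iB : i \notin B.
      by apply/negP => /(subsetP BA); rewrite inE iA.
    rewrite /Yobs1 /Yobs2 /Z1 /Z2 /ind /a /b /d iA (negbTE iB) /=; ring.
  rewrite /Yobs1 /Yobs2 /Z1 /Z2 /ind /a /b /d (negbTE iA) /=.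
  by case: (i \in B) => /=; ring.
have htau : tau1 R N Y1 = (N%:R)^-1 * \sum_(i < N) (a i - b i - d i).
  rewrite /tau1; congr (_ * _); apply: eq_bigr => i _.
  have := htic i Tv2 (or_intror erefl); rewrite /a /b /d; lra.
have eT : SWexp R N Nv1 Ncv2 (tauhat1 R N Nv1 Ncv2 Ncc Y1 Y2) =
          SWexp R N Nv1 Ncv2 (Tcore R N Nv1 Ncv2 Ncc a b d).
  exact: SWexp_ext.
split.
  by rewrite eT core_mean // htau.
rewrite /SWvar eT (@SWexp_ext R N Nv1 Ncv2 _ (fun A B => (Tcore R N Nv1 Ncv2 Ncc a b d A B -
   SWexp R N Nv1 Ncv2 (Tcore R N Nv1 Ncv2 Ncc a b d)) ^+ 2)); last first.
  by move=> A B hA hB; rewrite hT.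
rewrite -/(SWvar _ _ _ _ _) (@core_var _ _ _ _ _ hv1 hcv2 hcc hN a b d (tau1 R N Y1) htau).
by [].
Qed.
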